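(* Let $h\in[0:H-1]$, let $\mathbf{A}\in\{-1,1\}^{(d/2)\times d}$, and let $\widetilde{\mathbf{A}}_h$ be a submatrix of $\mathbf{A}$ consisting of $d/2-s_{\le h}$ of its rows. Suppose $|\mathcal{N}(\mathsf{O}^{\mathbf{M}_\mathbf{A}}(\widetilde{\mathbf{A}}_h),\alpha_h)|\ge 2^{s_h/\log d}$. Then there exist $s_{h+1}$ rows $\mathbf{R}_h$ of $\widetilde{\mathbf{A}}_h$ such that the matrix $\widetilde{\mathbf{A}}_{h+1}=\widetilde{\mathbf{A}}_h\setminus\mathbf{R}_h$ obtained by deleting them satisfies $$\big|\mathsf{O}^{\mathbf{M}_\mathbf{A}}(\widetilde{\mathbf{A}}_{h+1})\cap\mathcal{N}(\mathsf{O}^{\mathbf{M}_\mathbf{A}}(\widetilde{\mathbf{A}}_h),\alpha_h)\big|\ge 2^{s_h/(2\log d)}.$$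
   Context: Setting: $d$ large, $\delta\in(0,1)$, $k=d^{1-\delta-o(1)}$, $s=d^{1-\delta/2}\log^2 d$, $\xi=2\exp(-\log^5 d)$, $\xi'=\sqrt d\xi$, $n\le d\exp(-\log d/\log\log d)$, $\Delta=d/n$. A fixed deterministic $(k,n)$-protocol: on $\mathbf{A}$ Alice sends $\mathbf{M}_\mathbf{A}\in\{0,1\}^{kd}$; Bob's output is a unit vector $\mathbf{x}_{\mathbf{M},\mathbf{v},\mathbf{R}}$ defined for every $\mathbf{M}\in\{0,1\}^{kd}$, $\mathbf{v}\in\frac1{\sqrt d}\{-1,1\}^d$, $\mathbf{R}\in(\{-1,1\}^d\cup\{\mathsf{nil}\})^n$. A fixed set $V^*\subseteq\frac1{\sqrt d}\{-1,1\}^d$. For a matrix $\mathbf{B}$ with rows in $\{-1,1\}^d$: $\mathsf{T}^{\mathbf{M}}(\mathbf{B})=\{\mathbf{x}_{\mathbf{M},\mathbf{v},\mathbf{R}}:\mathbf{v}\in V^*,\ \text{each entry of }\mathbf{R}\text{ is }\mathsf{nil}\text{ or a row of }\mathbf{B}\}$ and $\mathsf{O}^{\mathbf{M}}(\mathbf{B})=\{\mathbf{x}\in\mathsf{T}^{\mathbf{M}}(\mathbf{B}):\|\mathbf{B}\mathbf{x}\|_\infty\le\xi'\}$. $\mathcal{N}(X,\alpha)$: a largest subset of $X$ with pairwise Euclidean distances at least $\alpha$. Parameters: $H$ is the smallest integer with $\frac{s}{\log^2 d}(\frac{\Delta}{\log^5 d})^H\ge d/10$; $s_h=\frac{s}{\log^2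 d}(\frac{\Delta}{\log^5 d})^h$ for $h\in[0:H-1]$ and $s_H=d/10$; $s_{\le h}=\sum_{i=1}^h s_i$, $s_{\le0}=0$; $\alpha_0=d^{-8}$, $\alpha_h=\alpha_{h-1}^8$. *)

(* Defs.v *)
From HB Require Import structures.
From mathcomp Require Import all_boot all_order all_algebra.
From mathcomp Require Import all_classical all_reals all_analysis.
From mathcomp Require Import finmap.
Set Implicit Arguments. Unset Strict Implicit. Unset Printing Implicit Defensive.
Import Order.TTheory GRing.Theory Num.Theory.
Local Open Scope ring_scope.

(* Signs {-1,1} are encoded by bool
   (true |-> 1, false |-> -1).  log = natural log ln. *)

Definition sgnR {R : realType} (b : bool) : R := if b then 1 else -1.

Definition svec (d : nat) := {ffun 'I_d -> bool}.
Definition signmat (m d : nat) := {ffun 'I_m -> svec d}.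
Definition msg (k d : nat) := {ffun 'I_(k * d) -> bool}.
(* Bob's R in ({-1,1}^d \cup {nil})^n ; None = nil *)
Definition rowseq (n d : nat) := {ffun 'I_n -> option (svec d)}.

(* A deterministic (k,n)-protocol; Bob's input v in (1/sqrt d){-1,1}^d is
   represented by its sign vector. *)
Record protocol (R : realType) (d k n : nat) := Protocol {
  alice : signmat d./2 d -> msg k d;
  bob : msg k d -> svec d -> rowseq n d -> 'rV[R]_d
}.

Definition enorm {R : realType} {d : nat} (x : 'rV[R]_d) : R :=
  Num.sqrt (\sum_(i < d) x 0 i ^+ 2).

Definition unit_output {R : realType} {d k n : nat} (P : protocol R d k n) :=
  forall M v Rr, enorm (bob P M v Rr) = 1.

Definition xi {R : realType} (d : nat) : R := 2 * expR (- (ln (d%:R : R)) ^+ 5).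
Definition xi' {R : realType} (d : nat) : R := Num.sqrt (d%:R : R) * xi d.
Definition sparam {R : realType} (d : nat) (delta : R) : R :=
  (d%:R : R) `^ (1 - delta / 2) * (ln (d%:R : R)) ^+ 2.
Definition Delta {R : realType} (d n : nat) : R := (d%:R : R) / n%:R.
Definition s_raw {R : realType} (d : nat) (delta : R) (n h : nat) : R :=
  sparam d delta / (ln (d%:R : R)) ^+ 2 * (Delta d n / (ln (d%:R : R)) ^+ 5) ^+ h.
Definition isH {R : realType} (d : nat) (delta : R) (n H : nat) : Prop :=
  (d%:R / 10 <= s_raw d delta n H) /\
  (forall j : nat, (j < H)%N -> s_raw d delta n j < d%:R / 10).
Definition s_h {R : realType} (d : nat) (delta : R) (n H h : nat) : R :=
  if (h < H)%N then s_raw d delta n h else d%:R / 10.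
Definition s_hN {R : realType} (d : nat) (delta : R) (n H h : nat) : nat :=
  Num.truncn (s_h d delta n H h).
Definition s_leN {R : realType} (d : nat) (delta : R) (n H h : nat) : nat :=
  (\sum_(1 <= i < h.+1) s_hN d delta n H i)%N.
Fixpoint alpha {R : realType} (d : nat) (h : nat) : R :=
  match h with
  | 0%N => ((d%:R : R) ^+ 8)^-1
  | h'.+1 => (alpha d h') ^+ 8
  end.

Definition nbound {R : realType} (d : nat) : R :=
  (d%:R : R) * expR (- (ln (d%:R : R) / ln (ln (d%:R : R)))).

(* k(d) = d^{1 - delta - o(1)} *)
Definition k_rate {R : realType} (delta : R) (kf : nat -> nat) : Prop :=
  forall eps : R, 0 < eps -> exists D : nat, forall d : nat, (D <= d)%N ->
    (d%:R : R) `^ (1 - delta - eps) <= (kf d)%:R /\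
    ((kf d)%:R : R) <= (d%:R : R) `^ (1 - delta + eps).

(* Submatrix B of A given by the set S of kept row indices. *)
Definition valid_rows {d n : nat} (A : signmat d./2 d) (S : {set 'I_d./2})
  (Rr : rowseq n d) : Prop :=
  forall j, Rr j = None \/ exists2 i, i \in S & Rr j = Some (A i).

Definition inT {R : realType} {d k n : nat} (P : protocol R d k n)
  (Vs : {set svec d}) (A : signmat d./2 d) (S : {set 'I_d./2}) (x : 'rV[R]_d) : Prop :=
  exists v (Rr : rowseq n d), [/\ v \in Vs, valid_rows A S Rr &
                                  x = bob P (alice P A) v Rr].

Definition inO {R : realType} {d k n : nat} (P : protocol R d k n)
  (Vs : {set svec d}) (A : signmat d./2 d) (S : {set 'I_d./2}) (x : 'rV[R]_d) : Prop :=
  inT P Vs A S x /\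
  forall i, i \in S -> `| \sum_(j < d) sgnR (A i j) * x 0 j | <= xi' d.

Definition is_packing {R : realType} {d : nat} (X : 'rV[R]_d -> Prop)
  (N : {fset 'rV[R]_d}) (a : R) : Prop :=
  (forall x, x \in N -> X x) /\
  (forall x y, x \in N -> y \in N -> x != y -> a <= enorm (x - y)).
Definition is_max_packing {R : realType} {d : nat} (X : 'rV[R]_d -> Prop)
  (N : {fset 'rV[R]_d}) (a : R) : Prop :=
  is_packing X N a /\
  (forall N' : {fset 'rV[R]_d}, is_packing X N' a -> (#|` N'| <= #|` N|)%N).

(* Main.v *)
Require Import Defs.
From HB Require Import structures.
From mathcomp Require Import all_boot all_order all_algebra.
From mathcomp Require Import all_classical all_reals all_analysis.
From mathcomp Require Import finmap.
From mathcomp Require Import ring lra.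
Import Order.TTheory GRing.Theory Num.Theory.
Local Open Scope ring_scope.
Lemma sum_const_seq (T : Type) (s : seq T) (n : nat) :
  (\sum_(x <- s) n = n * size s)%N.
Proof. by elim: s => [|a s IH]; rewrite ?big_nil ?big_cons ?IH ?muln0 // mulnS. Qed.

Lemma core (R : realFieldType) (I : finType) (T : Type) (X : seq T)
  (W : T -> {set I}) (S : {set I}) (n : nat) (q : R) :
  0 <= q <= 1 -> (forall x, #|W x| <= n)%N ->
  forall m, (m <= #|S|)%N -> n%:R <= q * (#|S| - m)%:R ->
  exists Rh : {set I}, [/\ Rh \subset S, #|Rh| = m &
    (size X)%:R * (1 - q) ^+ m <= (count (fun x => [disjoint Rh & W x]) X)%:R].
Proof.
move=> /andP[q0 q1] HW; elim=> [|m IH] Hm Hn.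
  exists finset.set0; split; [exact: finset.sub0set|exact: finset.cards0|].
  rewrite expr0 mulr1 ler_nat.
  have -> : count (fun x => [disjoint finset.set0 & W x]) X = count predT X.
    by apply: eq_count => x; rewrite /= -setI_eq0 finset.set0I eqxx.
  by rewrite count_predT.
have [|Rh [RhS cRh Hc]] := IH (ltnW Hm).
  apply: le_trans Hn _; apply: ler_wpM2l => //; rewrite ler_nat; apply: leq_sub2l; exact: leqnSn.
set Pl := S :\: Rh.
have cPl : #|Pl| = (#|S| - m)%N.
  by rewrite /Pl cardsD (finset.setIidPr RhS) cRh.
have : (0 < #|Pl|)%N by rewrite cPl subn_gt0.
rewrite finset.card_gt0 => /finset.set0Pn[i0 i0P].
set Y := seq.filter (fun x => [disjoint Rh & W x]) X.
pose c i := count (fun x => i \in W x) Y.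
have Hsum : (\sum_(i in Pl) c i <= n * size Y)%N.
  rewrite /c.
  under eq_bigr => i _ do rewrite -sum1_count big_mkcond /=.
  rewrite exchange_big /= -sum_const_seq; apply: leq_sum => x _.
  apply: leq_trans (HW x).
  apply: (@leq_trans (\sum_(i : I) (if i \in W x then 1 else 0))%N).
    rewrite [X in (_ <= X)%N](bigID (fun i => i \in Pl)) /=; exact: leq_addr.
  by rewrite -big_mkcond sum1_card.
case: (arg_minnP c i0P) => i iP imin.
have Hci : (#|Pl| * c i <= n * size Y)%N.
  apply: leq_trans Hsum; rewrite -sum_nat_const; apply: leq_sum => j; exact: imin.
have iS : i \in S by have iP' : i \in S :\: Rh := iP; move: iP'; rewrite finset.in_setD => /andP[].
have iRh : i \notin Rh by have iP' : i \in S :\: Rh := iP; move: iP'; rewrite finset.in_setD => /andP[].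
exists (i |: Rh); split.
- by rewrite finset.subUset finset.sub1set iS RhS.
- by rewrite finset.cardsU1 iRh cRh.
have -> : count (fun x => [disjoint i |: Rh & W x]) X =
          count (predC (fun x => i \in W x)) Y.
  rewrite count_filter; apply: eq_count => x /=.
  have -> : [disjoint i |: Rh & W x] = [disjoint predU1 i (mem Rh) & W x].
    by apply: eq_disjoint => z; rewrite !inE.
  by rewrite disjointU1.
have Hsz : (count (predC (fun x => i \in W x)) Y = size Y - c i)%N.
  by rewrite -(count_predC (fun x => i \in W x) Y) addKn.
rewrite Hsz.
have ciY : (c i <= size Y)%N by rewrite /c count_size.
rewrite natrB // exprSr mulrA.
have Hy : (size X)%:R * (1 - q) ^+ m <= (size Y)%:R by rewrite size_filter.
have cq : (c i)%:R <= q * (size Y)%:R.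
  have p0 : 0 < (#|Pl|)%:R :> R by rewrite ltr0n cPl subn_gt0.
  rewrite -(ler_pM2r p0).
  apply: (@le_trans _ _ ((n * size Y)%:R)).
    by rewrite -natrM ler_nat mulnC.
  rewrite natrM mulrAC; apply: ler_wpM2r => //.
  apply: le_trans Hn _; apply: ler_wpM2l => //; rewrite cPl ler_nat; apply: leq_sub2l; exact: leqnSn.
have q1' : 0 <= 1 - q by rewrite subr_ge0.
apply: (@le_trans _ _ ((size Y)%:R * (1 - q))).
  by apply: ler_wpM2r.
by rewrite mulrBr mulr1 lerD2l lerN2 mulrC.
Qed.

Lemma witness (R : realType) d k n (P : protocol R d k n) Vs A
  (S : {set 'I_d./2}) x (i0 : 'I_d./2) :
  inO P Vs A S x -> exists W : {set 'I_d./2}, (#|W| <= n)%N /\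
    forall Rh : {set 'I_d./2}, [disjoint Rh & W] -> inO P Vs A (S :\: Rh) x.
Proof.
case=> [[v [Rr [vV vr ->]]] Hb].
have : forall j, exists i : 'I_d./2, Rr j = None \/ (i \in S /\ Rr j = Some (A i)).
  move=> j; case: (vr j) => [->|[i iS ->]]; [by exists i0; left | by exists i; right].
case/choice => g Hg.
exists (finset.imset g (mem [set: 'I_n])); split.
  by apply: leq_trans (leq_imset_card _ _) _; rewrite finset.cardsT card_ord.
move=> Rh dis; split.
  exists v, Rr; split => // j; case: (Hg j) => [->|[iS ->]]; [by left|right].
  exists (g j) => //; rewrite finset.in_setD iS andbT.
  apply/negbT; apply: (disjointFl dis); apply: finset.imset_f; exact: finset.in_setT.
by move=> i; rewrite finset.in_setD => /andP[_ iS]; exact: Hb.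
Qed.
Lemma bigL (R : realType) (L : R) : expR 20 <= L ->
  [/\ 0 < L, 20 <= ln L & 8 * L ^+ 5 <= expR (L / ln L)].
Proof.
move=> HL; have L0 : 0 < L := lt_le_trans (expR_gt0 _) HL.
set u := ln L.
have u20 : 20 <= u.
  by rewrite -[X in X <= _](expRK 20) ler_ln // posrE expR_gt0.
split => //.
have u0 : 0 < u by apply: lt_le_trans u20; lra.
have Lu : L = expR u by rewrite /u lnK // posrE.
have H1 : 8 * u + 5 * u ^+ 2 <= L.
  rewrite Lu; apply: le_trans (expR_ge1Dxn 3 (ltW u0)).
  have -> : (3.+1)`! = 24%N by [].
  have u2 : 400 <= u ^+ 2 by rewrite expr2; nra.
  have u4 : u ^+ 4 = u ^+ 2 * u ^+ 2 by rewrite -exprD.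
  rewrite u4.
  have : 13 * u ^+ 2 <= u ^+ 2 * u ^+ 2 / 24.
    rewrite ler_pdivlMr; last lra. nra.
  nra.
have H2 : 8 + 5 * u <= L / u.
  rewrite ler_pdivlMr //; nra.
apply: (@le_trans _ _ (expR (8 + 5 * u))); last by rewrite ler_expR.
rewrite expRD.
rewrite expRM_natl -Lu.
have : 1 + 8 <= expR (8 : R) := expR_ge1Dx _.
have : 0 <= L ^+ 5 by rewrite exprn_ge0 // ltW.
nra.
Qed.

Lemma ln2_ge (R : realType) : 1 / 2 <= ln (2 : R).
Proof.
have h1 : 1 / 2 <= expR (- (1 / 2) : R).
  apply: le_trans (expR_ge1Dx _); lra.
have h2 : expR (1 / 2 : R) <= 2.
  have e0 := expR_gt0 (1 / 2 : R).
  have : expR (1 / 2 : R) * expR (- (1 / 2)) = 1 := expRxMexpNx_1 _.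
  nra.
rewrite -[X in X <= _](expRK (1 / 2)) ler_ln // posrE ?expR_gt0 //.
Qed.

Lemma exp_le1B (R : realType) (q : R) : 0 <= q <= 1 / 2 -> expR (- (2 * q)) <= 1 - q.
Proof.
move=> /andP[q0 q1].
have h := expR_ge1Dx (2 * q).
have e0 := expR_gt0 (2 * q).
have : expR (2 * q) * expR (- (2 * q)) = 1 := expRxMexpNx_1 _.
have e1 := expR_gt0 (- (2 * q)).
nra.
Qed.

Lemma geom (R : realFieldType) (a b : R) : 0 <= a -> 1 < b -> forall h : nat,
  (\sum_(1 <= i < h.+1) a * b ^+ i) * (b - 1) <= b * (a * b ^+ h).
Proof.
move=> a0 b1; elim=> [|h IH].
  by rewrite big_geq // mul0r mulr_ge0 // ?expr0 ?mulr1 // ltW // (lt_trans ltr01).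
rewrite big_nat_recr //= mulrDl.
have b0 : 0 <= b by apply: ltW; apply: lt_trans b1.
have e : b * (a * b ^+ h) = a * b ^+ h.+1 by rewrite exprS mulrCA.
rewrite e in IH.
apply: le_trans (lerD IH (lexx _)) _.
by rewrite le_eqVlt; apply/orP; left; apply/eqP; ring.
Qed.

Lemma key_ineq (R : realFieldType) (t l2 L : R) : 0 <= t -> 1 / 2 <= l2 -> 21 <= L ->
  t / 2 * l2 <= t * l2 - 8 * t / L ^+ 4.
Proof.
move=> t0 l2h L21.
have L4 : 32 <= L ^+ 4.
  have L2 : 441 <= L ^+ 2 by rewrite expr2; nra.
  have -> : L ^+ 4 = L ^+ 2 * L ^+ 2 by rewrite -exprD.
  nra.
have : 8 * t / L ^+ 4 <= t / 4.
  rewrite ler_pdivrMr; last lra.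
  nra.
nra.
Qed.
Lemma div2_eq (R : fieldType) (a b : R) : a / (2 * b) = a / b / 2.
Proof. by rewrite invfM mulrCA mulrC. Qed.
Lemma mq_eq (R : fieldType) (nr dr sh L : R) : nr != 0 -> dr != 0 -> L != 0 ->
  8 * nr / dr * (sh * (dr / nr / L ^+ 5)) = 8 * (sh / L) / L ^+ 4.
Proof. by move=> h1 h2 h3; field; rewrite h1 h2 h3. Qed.
Lemma q_eq (R : fieldType) (nr dr m : R) : 2 * (4 * nr / dr) * m = 8 * nr / dr * m.
Proof. by ring. Qed.
Lemma fin_ineq (R : realFieldType) (t l2 L q m : R) :
  t / 2 * l2 <= t * l2 - 8 * t / L ^+ 4 -> 2 * q * m <= 8 * t / L ^+ 4 ->
  t / 2 * l2 <= t * l2 + - (2 * q) * m.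
Proof. by move=> h1 h2; rewrite mulNr; lra. Qed.

Local Open Scope fset_scope.
Lemma cnt_le (K : choiceType) (N : {fset K}) (Q : pred K) (P : K -> Prop) :
  (forall x, x \in N -> Q x -> P x) ->
  (count Q N <= #|` [fset x in N | `[< P x >]] |)%N.
Proof.
move=> QP.
have e : #|` seq_fset tt (seq.filter Q N)| = count Q N.
  by rewrite size_seq_fset undup_id ?size_filter // filter_uniq // fset_uniq.
rewrite -e; apply: fsubset_leq_card; apply/fsubsetP => x.
rewrite seq_fsetE mem_filter => /andP[qx xN].
rewrite !inE /= xN /=; apply/asboolP; exact: QP.
Qed.

Theorem lemma5p6 (R : realType) (delta : R) (kf : nat -> nat) :
  0 < delta < 1 -> k_rate delta kf ->
  exists d0 : nat, forall d : nat, (d0 <= d)%N -> ~~ odd d ->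
  forall n : nat, (0 < n)%N -> (n%:R : R) <= nbound d ->
  forall P : protocol R d (kf d) n, unit_output P ->
  forall (Vs : {set svec d}) (H h : nat), isH d delta n H -> (h < H)%N ->
  forall (A : signmat d./2 d) (S : {set 'I_d./2}),
  #|S| = (d./2 - s_leN d delta n H h)%N ->
  forall N : {fset 'rV[R]_d}, is_max_packing (inO P Vs A S) N (alpha d h) ->
  2 `^ (s_h d delta n H h / ln (d%:R : R)) <= (#|` N|)%:R ->
  exists Rh : {set 'I_d./2},
    [/\ Rh \subset S, #|Rh| = s_hN d delta n H h.+1 &
      2 `^ (s_h d delta n H h / (2 * ln (d%:R : R)))
        <= (#|` [fset x in N | `[< inO P Vs A (S :\: Rh) x >]] |)%:R].
Proof.
move=> _ _.
exists (Num.truncn (expR (expR (20 : R)))).+1 => d Hd dev n n0 nB P _ Vs H h HH hH A S cS N [[NinO _] _] HN.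
set dr := (d%:R : R).
have dr_big : expR (expR 20) <= dr.
  apply: ltW; apply: lt_le_trans (truncnS_gt _) _; rewrite /dr ler_nat; exact: Hd.
have dr0 : 0 < dr := lt_le_trans (expR_gt0 _) dr_big.
set L := ln dr.
have LB : expR 20 <= L.
  by rewrite /L -[X in X <= _](expRK (expR 20)) ler_ln // posrE expR_gt0.
have [L0 u20 L8] := @bigL _ _ LB.
have L21 : 21 <= L by apply: le_trans LB; apply: le_trans (expR_ge1Dx _); lra.
set nr := (n%:R : R).
have nr0 : 0 < nr by rewrite ltr0n.
have nL : nr * (8 * L ^+ 5) <= dr.
  apply: (@le_trans _ _ (nr * expR (L / ln L))); first by rewrite ler_pM2l.
  move: nB; rewrite /nbound -/dr -/L expRN => h1.
  by rewrite -ler_pdivlMr ?expR_gt0.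
have L5 : 0 < L ^+ 5 by rewrite exprn_gt0.
have L51 : 1 <= L ^+ 5 by rewrite exprn_ege1 //; lra.
set r := Delta d n / L ^+ 5.
have r8 : 8 <= r.
  rewrite /r /Delta -/dr -/nr ler_pdivlMr // ler_pdivlMr //; nra.
have r0 : 0 <= r by lra.
have sraw_ge0 : forall j, 0 <= s_raw d delta n j.
  move=> j; rewrite /s_raw -/r; apply: mulr_ge0; last exact: exprn_ge0.
  apply: divr_ge0; last exact: exprn_ge0 (ltW L0).
  by rewrite /sparam; apply: mulr_ge0; [exact: powR_ge0| exact: exprn_ge0 (ltW L0)].
have srawS : forall j, s_raw d delta n j.+1 = s_raw d delta n j * r.
  by move=> j; rewrite /s_raw [_ ^+ j.+1]exprSr mulrA.
set sh := s_h d delta n H h.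
have shE : sh = s_raw d delta n h by rewrite /sh /s_h hH.
have sh0 : 0 <= sh by rewrite shE.
have sh10 : sh < dr / 10 by rewrite shE; exact: HH.2 h hH.
set m := s_hN d delta n H h.+1.
have [m1 m2] : m%:R <= sh * r /\ m%:R <= dr / 10.
  rewrite /m /s_hN /s_h; case: ltnP => hH1.
    have tl : (Num.truncn (s_raw d delta n h.+1))%:R <= s_raw d delta n h.+1.
      by rewrite truncn_le.
    split; first by rewrite shE -srawS.
    by apply: le_trans tl (ltW (HH.2 _ hH1)).
  have eH : H = h.+1 by apply/eqP; rewrite eqn_leq hH1 hH.
  have x0 : 0 <= dr / 10 by apply: divr_ge0 => //; exact: ltW.
  have tl : (Num.truncn (dr / 10))%:R <= dr / 10 by rewrite truncn_le.
  split => //; apply: le_trans tl _; rewrite shE -srawS -eH; exact: HH.1.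
have sle1 : (s_leN d delta n H h)%:R <= \sum_(1 <= i < h.+1) s_raw d delta n i.
  rewrite /s_leN natr_sum; apply: ler_sum_nat => i /andP[_ ih].
  have iH : (i < H)%N by apply: leq_trans ih hH.
  by rewrite /s_hN /s_h iH truncn_le.
have sle : (s_leN d delta n H h)%:R <= dr * 8 / 70.
  have a0 : 0 <= sparam d delta / ln (R:=R) d%:R ^+ 2.
    by apply: divr_ge0; [rewrite /sparam; apply: mulr_ge0; [exact: powR_ge0| exact: exprn_ge0 (ltW L0)] | exact: exprn_ge0 (ltW L0)].
  have r1 : 1 < r by lra.
  have g : (\sum_(1 <= i < h.+1) s_raw d delta n i) * (r - 1) <= r * s_raw d delta n h
    := @geom _ _ _ a0 r1 h.
  rewrite -shE in g.
  have s0 : 0 <= \sum_(1 <= i < h.+1) s_raw d delta n i.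
    by apply: sumr_ge0 => i _.
  nra.
have d2 : (d./2)%:R = dr / 2.
  have := odd_double_half d; rewrite (negbTE dev) add0n => e.
  by rewrite /dr -{2}e -muln2 natrM; field.
have sleN : (s_leN d delta n H h <= d./2)%N.
  by rewrite -(ler_nat R) d2; lra.
have Tr : (#|S|)%:R = dr / 2 - (s_leN d delta n H h)%:R by rewrite cS natrB // d2.
have mT : (m <= #|S|)%N by rewrite -(ler_nat R) Tr; lra.
have TmR : dr / 4 <= (#|S| - m)%:R by rewrite natrB // Tr; lra.
set q := 4 * nr / dr.
have nr8 : 8 * nr <= dr by nra.
have q0 : 0 <= q by rewrite /q; apply: divr_ge0; lra.
have q12 : q <= 1 / 2 by rewrite /q ler_pdivrMr //; lra.
have Hn : nr <= q * (#|S| - m)%:R.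
  apply: le_trans (ler_wpM2l q0 TmR); rewrite /q le_eqVlt; apply/orP; left; apply/eqP; field; lra.
have d2pos : (0 < d./2)%N by rewrite -(ltr_nat R) d2; lra.
pose i0 : 'I_d./2 := Ordinal d2pos.
have : forall x : 'rV[R]_d, exists W : {set 'I_d./2}, (#|W| <= n)%N /\
    (x \in N -> forall Rh : {set 'I_d./2}, [disjoint Rh & W]%bool -> inO P Vs A (S :\: Rh) x).
  move=> x; case: (boolP (x \in N)) => xN.
    have [W [cW HW]] := @witness _ _ _ _ P Vs A S x i0 (NinO x xN); by exists W.
  by exists finset.set0; rewrite finset.cards0.
case/choice => W HW.
have q01 : 0 <= q <= 1 by rewrite q0 /=; lra.
have [Rh [RhS cRh Hc]] := @core R _ _ (enum_fset N) W S n q q01 (fun x => proj1 (HW x)) m mT Hn.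
exists Rh; split => //.
have HC : (#|` N|)%:R * (1 - q) ^+ m <=
    (#|` [fset x in N | `[< inO P Vs A (S :\: Rh) x >]] |)%:R.
  apply: le_trans Hc _; rewrite ler_nat; apply: cnt_le => x xN dx.
  exact: (proj2 (HW x) xN Rh dx).
have pw : forall y : R, 2 `^ y = expR (y * ln 2).
  by move=> y; rewrite /powR (negbTE (_ : (2:R) != 0)) // pnatr_eq0.
rewrite pw; rewrite pw in HN.
have l2h := ln2_ge R.
move: l2h HN; generalize (ln (2 : R)) => l2 l2h HN.
have HN' : expR (sh / L * l2) <= (#|` N|)%:R := HN.
pose t := sh / L.
have t0 : 0 <= t := divr_ge0 sh0 (ltW L0).
have e1 : s_h d delta n H h / (2 * ln (d%:R : R)) * l2 = t / 2 * l2.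
  by rewrite div2_eq.
have mq : 2 * q * m%:R <= 8 * t / L ^+ 4.
  rewrite /q q_eq.
  have c0 : 0 <= 8 * nr / dr by apply: divr_ge0; [apply: mulr_ge0 => //; exact: ltW | exact: ltW].
  apply: le_trans (ler_wpM2l c0 m1) _.
  rewrite /r /Delta mq_eq ?(gt_eqF L0) ?(gt_eqF nr0) ?(gt_eqF dr0) //.
have key := @key_ineq _ _ _ _ t0 l2h L21.
rewrite e1; apply: le_trans HC.
apply: (@le_trans _ _ (expR (t * l2) * expR (- (2 * q) * m%:R))).
  by rewrite -expRD ler_expR; exact: (@fin_ineq _ _ _ _ _ _ key mq).
apply: ler_pM; rewrite ?expR_ge0 //.
rewrite expRM_natr; apply: lerXn2r; rewrite ?nnegrE ?expR_ge0 //.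
- by rewrite subr_ge0; apply: le_trans q12 _; rewrite ler_pdivrMr //; rewrite mul1r ler1n.
- by apply: exp_le1B; rewrite q0 q12.
Qed.
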